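(* Fix $m\ge1$ and $\rho>0$. For a partition $\kappa$ with at most $m$ parts, regarded as $(\kappa_1,\dots,\kappa_m,0,\dots,0)\in\mathbb Z^n$, let $\delta_\kappa:=\prod_{1\le i<j\le n}\frac{\kappa_i-\kappa_j+j-i}{j-i}$. If $n\to+\infty$ and $k\to+\infty$ with $n/(2k)\to\rho^{-1}$, then $$\limsup\frac1n\log\Big(\sum_{|\kappa|=2k,\ \ell(\kappa)\le m}\delta_\kappa\Big)\le m\big((1+\rho)\log(1+\rho)-\rho\log\rho\big),$$ where the sum is over partitions of $2k$ with at most $m$ nonzero parts.
   Context: $\delta_\kappa$ is the dimension of the irreducible polynomial representation $F_n^\kappa$ of $GL(n)$ with highest weight $\kappa$. $\ell(\kappa)$ is the number of nonzero parts of $\kappa$. Logarithms are natural. *)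

(* Defs.v *)
From Stdlib Require Import Reals Lra Lia List Arith.
From Coquelicot Require Import Coquelicot.
Import ListNotations.
Open Scope R_scope.

Definition prodR (a b : nat) (f : nat -> R) : R :=
  fold_right (fun i acc => f i * acc) 1 (seq a (b - a)).

(* delta_kappa for kappa : nat -> nat regarded as (kappa 0, ..., kappa (n-1))
   (0-indexed): prod_{0 <= i < j < n} (kappa_i - kappa_j + j - i)/(j - i) *)
Definition delta (n : nat) (kappa : nat -> nat) : R :=
  prodR 0 n (fun i => prodR (S i) n (fun j =>
    (INR (kappa i) - INR (kappa j) + INR j - INR i) / (INR j - INR i))).

Fixpoint tuples (m N : nat) : list (list nat) :=
  match m with
  | O => [[]]
  | S m' => flat_map (fun a => map (cons a) (tuples m' N)) (seq 0 (S N))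
  end.

Fixpoint nonincr (l : list nat) : bool :=
  match l with
  | x :: ((y :: _) as t) => andb (Nat.leb y x) (nonincr t)
  | _ => true
  end.

(* partitions of N with at most m nonzero parts, each written as the
   nonincreasing list (kappa_1, ..., kappa_m) padded with zeros *)
Definition partitions_le (m N : nat) : list (list nat) :=
  filter (fun l => andb (nonincr l) (Nat.eqb (list_sum l) N)) (tuples m N).

Definition Sdelta (m n k : nat) : R :=
  fold_right Rplus 0
    (map (fun l => delta n (fun i => nth i l 0%nat)) (partitions_le m (2 * k))).

(* Main.v *)
Require Import Defs.
From Stdlib Require Import Reals Lra Lia List Arith.
From Coquelicot Require Import Coquelicot.
Import ListNotations.
Open Scope R_scope.

Lemma fold_prod_le (l : list nat) (f g : nat -> R) :
  (forall t, In t l -> 0 <= f t <= g t) ->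
  0 <= fold_right (fun i acc => f i * acc) 1 l <= fold_right (fun i acc => g i * acc) 1 l.
Proof.
  induction l as [|a l IH]; intros H; simpl; [lra|].
  destruct (H a (or_introl eq_refl)) as [H1 H2].
  destruct IH as [H3 H4]; [intros t Ht; apply H; now right|].
  split; [now apply Rmult_le_pos|].
  apply Rmult_le_compat; lra.
Qed.

Lemma fold_mult_acc (l : list nat) (f : nat -> R) c :
  fold_right (fun i acc => f i * acc) c l = fold_right (fun i acc => f i * acc) 1 l * c.
Proof. induction l as [|a l IH]; simpl; [ring| rewrite IH; ring]. Qed.

Lemma fold_ones (l : list nat) :
  fold_right (fun (_ : nat) acc => 1 * acc) 1 l = 1.
Proof. induction l; simpl; [lra| rewrite IHl; ring]. Qed.

Lemma prodR_S a b f : (a <= b)%nat -> prodR a (S b) f = prodR a b f * f b.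
Proof.
  intros H. unfold prodR. replace (S b - a)%nat with (S (b - a)) by lia.
  rewrite seq_S, fold_right_app. simpl. replace (a + (b - a))%nat with b by lia.
  rewrite fold_mult_acc. ring.
Qed.

Lemma fold_shift (h : R -> R) i len : forall s, (i <= s)%nat ->
  fold_right (fun j acc => h (INR j - INR i) * acc) 1 (seq s len) =
  fold_right (fun t acc => h (INR t) * acc) 1 (seq (s - i) len).
Proof.
  induction len as [|len IH]; intros s Hs; simpl; [reflexivity|].
  rewrite IH by lia. rewrite <- minus_INR by lia.
  replace (S s - i)%nat with (S (s - i)) by lia. reflexivity.
Qed.

Definition Q (K L : nat) : R := prodR 1 (S L) (fun t => (INR K + INR t) / INR t).

Lemma Q_S K L : Q K (S L) = Q K L * ((INR K + INR (S L)) / INR (S L)).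
Proof. unfold Q. rewrite (prodR_S 1 (S L)) by lia. reflexivity. Qed.

Lemma Q_0 K : Q K 0 = 1.
Proof. reflexivity. Qed.

Lemma factor_ge1 K L : 1 <= (INR K + INR (S L)) / INR (S L).
Proof.
  assert (H := pos_INR K). assert (H2 := lt_0_INR (S L) ltac:(lia)).
  apply (Rmult_le_reg_r (INR (S L))); [lra|]. field_simplify; lra.
Qed.

Lemma Q_ge1 K L : 1 <= Q K L.
Proof.
  induction L; [rewrite Q_0; lra|]. rewrite Q_S.
  pose proof (factor_ge1 K L). nra.
Qed.

Lemma Q_mono K L L' : (L <= L')%nat -> Q K L <= Q K L'.
Proof.
  induction 1; [lra|]. rewrite Q_S. pose proof (factor_ge1 K m).
  pose proof (Q_ge1 K m). nra.
Qed.

Lemma Q_fact K L : Q K L * INR (fact K) * INR (fact L) = INR (fact (L + K)).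
Proof.
  induction L; [rewrite Q_0; simpl; ring|].
  rewrite Q_S. change (fact (S L)) with (S L * fact L)%nat.
  change (fact (S L + K)) with (S (L + K) * fact (L + K))%nat.
  rewrite !mult_INR, <- IHL.
  assert (H2 := lt_0_INR (S L) ltac:(lia)).
  replace (INR (S (L + K))) with (INR K + INR (S L)) by (rewrite !S_INR, plus_INR; ring).
  field. lra.
Qed.

Lemma sum_ge_term (f : nat -> R) N i : (forall j, 0 <= f j) -> (i <= N)%nat -> f i <= sum_f_R0 f N.
Proof.
  intros Hf. induction N; intros Hi.
  - replace i with 0%nat by lia. simpl. lra.
  - simpl. destruct (Nat.eq_dec i (S N)).
    + subst. pose proof (cond_pos_sum f N Hf). lra.
    + pose proof (IHN ltac:(lia)). pose proof (Hf (S N)). lra.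
Qed.

Lemma Q_bound K L : Q K L * INR K ^ K * INR L ^ L <= INR (L + K) ^ (L + K).
Proof.
  replace (L + K)%nat with (K + L)%nat by lia.
  pose proof (binomial (INR K) (INR L) (K + L)) as Hb.
  rewrite <- plus_INR in Hb. rewrite Hb.
  eapply Rle_trans; [| apply (sum_ge_term _ _ K)]; [| | lia].
  - simpl. replace (K + L - K)%nat with L by lia. unfold Binomial.C.
    replace (K + L - K)%nat with L by lia.
    pose proof (Q_fact K L) as HQ. rewrite Nat.add_comm in HQ.
    assert (0 < INR (fact K)) by (apply lt_0_INR, lt_O_fact).
    assert (0 < INR (fact L)) by (apply lt_0_INR, lt_O_fact).
    rewrite <- HQ. right. field. lra.
  - intros j. unfold Binomial.C.
    apply Rmult_le_pos; [apply Rmult_le_pos|]; try (apply pow_le, pos_INR).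
    apply Rmult_le_pos; [apply pos_INR|]. left. apply Rinv_0_lt_compat.
    apply Rmult_lt_0_compat; apply lt_0_INR, lt_O_fact.
Qed.

Lemma tuples_in m N : forall l, In l (tuples m N) ->
  length l = m /\ (forall x, In x l -> (x <= N)%nat).
Proof.
  induction m as [|m IH]; intros l Hl; cbn [tuples] in Hl.
  - destruct Hl as [<-|[]]. simpl. split; [reflexivity| tauto].
  - apply in_flat_map in Hl. destruct Hl as [a [Ha Hl]].
    apply in_map_iff in Hl. destruct Hl as [t [<- Ht]].
    apply in_seq in Ha. destruct (IH t Ht) as [H1 H2].
    simpl. split; [lia|]. intros x [<-|Hx]; [lia| auto].
Qed.

Lemma length_flat_map_const {A B} (f : A -> list B) c l :
  (forall a, length (f a) = c) -> length (flat_map f l) = (length l * c)%nat.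
Proof.
  intros H. induction l; simpl; [reflexivity|]. rewrite length_app, H, IHl. lia.
Qed.

Lemma tuples_length m N : length (tuples m N) = (S N ^ m)%nat.
Proof.
  induction m; cbn [tuples]; [reflexivity|].
  rewrite (length_flat_map_const _ (length (tuples m N))).
  - rewrite length_seq, IHm. simpl. lia.
  - intros a. apply length_map.
Qed.

Lemma nonincr_head l j : nonincr l = true -> (nth j l 0 <= nth 0 l 0)%nat.
Proof.
  revert j. induction l as [|x t IH]; intros j H; [destruct j; simpl; lia|].
  destruct j; [simpl; lia|]. simpl.
  destruct t as [|y t']; [destruct j; simpl; lia|].
  simpl in H. apply Bool.andb_true_iff in H. destruct H as [H1 H2].
  apply Nat.leb_le in H1. specialize (IH j H2). change (nth 0 (y :: t') 0%nat) with y in IH. lia.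
Qed.

Lemma nonincr_tail x t : nonincr (x :: t) = true -> nonincr t = true.
Proof. destruct t; simpl; [auto|]. intros H. apply Bool.andb_true_iff in H. tauto. Qed.

Lemma nonincr_nth l : nonincr l = true -> forall i j, (i <= j)%nat -> (nth j l 0 <= nth i l 0)%nat.
Proof.
  induction l as [|x t IH]; intros H i j Hij; [destruct i, j; simpl; lia|].
  destruct i.
  - apply nonincr_head; auto.
  - destruct j; [lia|]. simpl. apply IH; [eapply nonincr_tail; eauto| lia].
Qed.

Lemma prod_if_le m n (q : R) : 1 <= q ->
  prodR 0 n (fun i => if (i <? m)%nat then q else 1) <= q ^ m.
Proof.
  intros Hq. assert (Hg : forall n, prodR 0 n (fun i => if (i <? m)%nat then q else 1) <= q ^ (Nat.min n m)
     /\ 0 <= prodR 0 n (fun i => if (i <? m)%nat then q else 1)).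
  { induction n0; [simpl; unfold prodR; simpl; lra|].
    rewrite prodR_S by lia. destruct IHn0 as [H1 H2].
    destruct (Nat.ltb_spec n0 m).
    - replace (Nat.min (S n0) m) with (S (Nat.min n0 m)) by lia. simpl. nra.
    - replace (Nat.min (S n0) m) with (Nat.min n0 m) by lia. lra. }
  destruct (Hg n) as [H1 _]. eapply Rle_trans; [exact H1|].
  apply Rle_pow; [lra| lia].
Qed.

Lemma delta_bound m n N l : length l = m -> (forall x, In x l -> (x <= N)%nat) ->
  nonincr l = true -> delta n (fun i => nth i l 0%nat) <= Q N n ^ m.
Proof.
  intros Hlen HN Hni. unfold delta.
  eapply Rle_trans; [| apply (prod_if_le m n), Q_ge1].
  apply fold_prod_le. intros i Hi. apply in_seq in Hi.
  destruct (Nat.ltb_spec i m).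
  -
    assert (Hk : (nth i l 0 <= N)%nat) by (apply HN, nth_In; lia).
    set (h := fun x => (INR N + x) / x).
    assert (Hle : 0 <= prodR (S i) n (fun j => (INR (nth i l 0%nat) - INR (nth j l 0%nat) + INR j - INR i) / (INR j - INR i))
               <= prodR (S i) n (fun j => h (INR j - INR i))).
    { apply fold_prod_le. intros j Hj. apply in_seq in Hj.
      assert (Hij : (nth j l 0 <= nth i l 0)%nat) by (apply nonincr_nth; auto; lia).
      apply le_INR in Hij. apply le_INR in Hk.
      assert (INR i < INR j) by (apply lt_INR; lia).
      pose proof (pos_INR (nth j l 0%nat)).
      unfold h. split; [apply Rdiv_le_0_compat; lra|]. apply Rmult_le_compat_r; [left; apply Rinv_0_lt_compat; lra| lra]. }
    split; [apply Hle|]. eapply Rle_trans; [apply Hle|].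
    unfold prodR. rewrite fold_shift by lia. replace (S i - i)%nat with 1%nat by lia.
    unfold h. eapply Rle_trans; [| apply (Q_mono N (n - S i) n); lia].
    unfold Q, prodR. replace (S (n - S i) - 1)%nat with (n - S i)%nat by lia. lra.
  -
    assert (H0 : forall j, (i <= j)%nat -> nth j l 0%nat = 0%nat) by (intros; apply nth_overflow; lia).
    assert (Hone : prodR (S i) n (fun _ => 1) = 1) by (unfold prodR; apply fold_ones).
    match goal with |- 0 <= ?X <= 1 => cut (0 <= X <= prodR (S i) n (fun _ => 1)); [rewrite Hone; auto|] end.
    apply fold_prod_le. intros j Hj. apply in_seq in Hj.
    rewrite !H0 by lia. assert (INR i < INR j) by (apply lt_INR; lia).
    replace ((INR 0 - INR 0 + INR j - INR i) / (INR j - INR i)) with 1 by (simpl; field; lra). lra.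
Qed.

Lemma sum_bound_gen (P : list (list nat)) (F : list nat -> R) B :
  (forall l, In l P -> F l <= B) -> 0 <= B ->
  fold_right Rplus 0 (map F P) <= INR (length P) * B.
Proof.
  intros H HB. induction P as [|a P IH]; cbn [fold_right map length]; [simpl; lra|].
  rewrite S_INR. pose proof (H a (or_introl eq_refl)).
  assert (fold_right Rplus 0 (map F P) <= INR (length P) * B) by (apply IH; intros; apply H; now right).
  lra.
Qed.

Lemma Sdelta_bound m n k : Sdelta m n k <= (INR (2 * k) + 1) ^ m * Q (2 * k) n ^ m.
Proof.
  unfold Sdelta. eapply Rle_trans.
  - apply sum_bound_gen with (B := Q (2 * k) n ^ m).
    + intros l Hl. unfold partitions_le in Hl. apply filter_In in Hl.
      destruct Hl as [Hl Hb]. apply Bool.andb_true_iff in Hb. destruct Hb as [Hb _].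
      destruct (tuples_in _ _ _ Hl). apply delta_bound; auto.
    + apply pow_le. pose proof (Q_ge1 (2 * k) n). lra.
  - apply Rmult_le_compat_r; [apply pow_le; pose proof (Q_ge1 (2 * k) n); lra|].
    unfold partitions_le. eapply Rle_trans; [apply le_INR, filter_length_le|].
    rewrite tuples_length, pow_INR, S_INR. lra.
Qed.

Definition fr (r : R) := (1 + r) * ln (1 + r) - r * ln r.

Lemma ln_nonpos x : x <= 0 -> ln x = 0.
Proof. intros H. unfold ln. destruct (Rlt_dec 0 x); [exfalso; lra| reflexivity]. Qed.

Lemma pointwise m n k : (1 <= n)%nat -> (1 <= k)%nat ->
  / INR n * ln (Sdelta m n k) <=
  INR m * (ln (INR (2 * k) + 1) / INR n) + INR m * fr (INR (2 * k) / INR n).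
Proof.
  intros Hn Hk. set (N := (2 * k)%nat).
  assert (HN0 : 0 < INR N) by (apply lt_0_INR; unfold N; lia).
  assert (Hn0 : 0 < INR n) by (apply lt_0_INR; lia).
  assert (HnN : 0 < INR (n + N)) by (apply lt_0_INR; lia).
  set (E := INR (n + N) ^ (n + N) / (INR N ^ N * INR n ^ n)).
  assert (HNp : 0 < INR N ^ N) by (apply pow_lt; lra).
  assert (Hnp : 0 < INR n ^ n) by (apply pow_lt; lra).
  assert (HQE : Q N n <= E).
  { unfold E. pose proof (Q_bound N n).
    apply (Rmult_le_reg_r (INR N ^ N * INR n ^ n)); [nra|].
    unfold Rdiv. rewrite Rmult_assoc, Rinv_l, Rmult_1_r, <- Rmult_assoc by (apply Rgt_not_eq, Rmult_lt_0_compat; lra). lra. }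
  assert (HQ1 := Q_ge1 N n).
  set (Bd := (INR N + 1) ^ m * E ^ m).
  assert (HSB : Sdelta m n k <= Bd).
  { eapply Rle_trans; [apply Sdelta_bound|]. unfold Bd.
    apply Rmult_le_compat_l; [apply pow_le; lra|]. apply pow_incr. unfold N in *; lra. }
  assert (HB1 : 1 <= Bd).
  { unfold Bd. assert (1 <= (INR N + 1) ^ m) by (apply pow_R1_Rle; lra).
    assert (1 <= E ^ m) by (apply pow_R1_Rle; lra). nra. }
  assert (HlnS : ln (Sdelta m n k) <= ln Bd).
  { destruct (Rlt_dec 0 (Sdelta m n k)).
    - apply ln_le; auto.
    - rewrite ln_nonpos by lra. rewrite <- ln_1. apply ln_le; lra. }
  eapply Rle_trans; [apply Rmult_le_compat_l; [left; apply Rinv_0_lt_compat; lra| exact HlnS]|].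
  right. unfold Bd, E, fr.
  assert (0 < E) by (unfold E; apply Rdiv_lt_0_compat; [apply pow_lt|]; nra).
  rewrite ln_mult by (apply pow_lt; unfold E in *; lra).
  rewrite !ln_pow by (unfold E in *; lra).
  rewrite ln_div by (try apply pow_lt; nra).
  rewrite ln_mult by lra. rewrite !ln_pow by lra.
  replace (1 + INR N / INR n) with (INR (n + N) / INR n) by (rewrite plus_INR; field; lra).
  rewrite !ln_div by lra. rewrite plus_INR. field. lra.
Qed.

Theorem lemma6p1 (m : nat) (rho : R) (hm : (1 <= m)%nat) (hrho : 0 < rho)
  (n k : nat -> nat)
  (hn : is_lim_seq (fun j => INR (n j)) p_infty)
  (hk : is_lim_seq (fun j => INR (k j)) p_infty)
  (hr : is_lim_seq (fun j => INR (n j) / (2 * INR (k j))) (/ rho)) :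
  Rbar_le
    (LimSup_seq (fun j => / INR (n j) * ln (Sdelta m (n j) (k j))))
    (Finite (INR m * ((1 + rho) * ln (1 + rho) - rho * ln rho))).
Proof.
  set (v := fun j => INR m * (ln (INR (2 * k j) + 1) / INR (n j)) + INR m * fr (INR (2 * k j) / INR (n j))).
  assert (Hev : eventually (fun j => / INR (n j) * ln (Sdelta m (n j) (k j)) <= v j)).
  { destruct (proj2 (is_lim_seq_spec _ _) hn (1/2)) as [N1 HN1].
    destruct (proj2 (is_lim_seq_spec _ _) hk (1/2)) as [N2 HN2].
    exists (Nat.max N1 N2). intros j Hj.
    specialize (HN1 j ltac:(lia)). specialize (HN2 j ltac:(lia)).
    apply pointwise.
    - destruct (n j); [simpl in HN1; lra| lia].
    - destruct (k j); [simpl in HN2; lra| lia]. }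
  assert (H2 : forall j, INR (2 * k j) = 2 * INR (k j)) by (intros; rewrite mult_INR; simpl; ring).
  assert (H1 : is_lim_seq (fun j => INR (2 * k j) / INR (n j)) rho).
  { rewrite <- (Rinv_inv rho).
    eapply is_lim_seq_ext; [| apply (is_lim_seq_inv _ _ hr)].
    - intros j. cbv beta. rewrite Rinv_div, H2. reflexivity.
    - intros H. apply (Rinv_neq_0_compat rho); [lra|]. injection H; auto. }
  assert (Hln : forall x, 0 < x -> continuity_pt ln x).
  { intros x Hx. apply derivable_continuous_pt. exists (/ x). apply derivable_pt_lim_ln; lra. }
  assert (Hf : is_lim_seq (fun j => fr (INR (2 * k j) / INR (n j))) (fr rho)).
  { unfold fr. apply is_lim_seq_minus'; apply is_lim_seq_mult'.
    - apply is_lim_seq_plus'; [apply is_lim_seq_const| exact H1].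
    - apply (is_lim_seq_continuous ln (fun j => 1 + INR (2 * k j) / INR (n j)) (1 + rho)).
      + apply Hln; lra.
      + apply is_lim_seq_plus'; [apply is_lim_seq_const| exact H1].
    - exact H1.
    - apply (is_lim_seq_continuous ln _ rho); [apply Hln; lra| exact H1]. }
  assert (Hinf : is_lim_seq (fun j => INR (2 * k j) + 1) p_infty).
  { apply (is_lim_seq_le_p_loc (fun j => INR (k j))); [| exact hk].
    exists 0%nat. intros j _. rewrite H2. pose proof (pos_INR (k j)). lra. }
  assert (Hl1 : is_lim_seq (fun j => ln (INR (2 * k j) + 1) / (INR (2 * k j) + 1)) 0).
  { apply (is_lim_comp_seq (fun y => ln y / y) _ p_infty 0).
    - exact is_lim_div_ln_p.
    - exists 0%nat. intros j _. discriminate.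
    - exact Hinf. }
  assert (Hinv : is_lim_seq (fun j => / INR (n j)) 0).
  { apply (is_lim_seq_inv _ _ hn). discriminate. }
  assert (Hq : is_lim_seq (fun j => (INR (2 * k j) + 1) / INR (n j)) (rho + 0)).
  { eapply is_lim_seq_ext; [| apply (is_lim_seq_plus' _ _ _ _ H1 Hinv)].
    intros j. simpl. unfold Rdiv. ring. }
  assert (Hlog : is_lim_seq (fun j => ln (INR (2 * k j) + 1) / INR (n j)) (0 * (rho + 0))).
  { eapply is_lim_seq_ext; [| apply (is_lim_seq_mult' _ _ _ _ Hl1 Hq)].
    intros j. cbv beta. assert (0 <= INR (2 * k j)) by apply pos_INR.
    unfold Rdiv. rewrite <- Rmult_assoc. rewrite (Rmult_assoc (ln _) (/ _) _).
    rewrite Rinv_l by (apply Rgt_not_eq; lra). rewrite Rmult_1_r. reflexivity. }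
  assert (Hv : is_lim_seq v (INR m * (0 * (rho + 0)) + INR m * fr rho)).
  { apply is_lim_seq_plus'; apply is_lim_seq_mult'; auto; apply is_lim_seq_const. }
  eapply Rbar_le_trans; [apply (LimSup_le _ v Hev)|].
  rewrite (is_LimSup_seq_unique v _ (is_lim_LimSup_seq _ _ Hv)).
  simpl. unfold fr. right. ring.
Qed.
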